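(* For every integer $\Delta\ge 3$ and every integer $g\ge 3$, there exists a $\Delta$-regular bipartite graph $G$ with girth at least $g$ such that $\chi'_{inj}(G)\ge \Delta$.
   Context: All graphs are finite and simple. An edge coloring of a graph $G$ (not necessarily proper) is \emph{injective} if any two distinct edges $e,f$ receive distinct colors whenever either (i) $e$ and $f$ share no vertex and some edge of $G$ joins an endpoint of $e$ to an endpoint of $f$, or (ii) $e$ and $f$ lie in a common triangle of $G$. The injective chromatic index $\chi'_{inj}(G)$ is the minimum number of colors in an injective edge coloring of $G$. *)

(* Defs.v *)
From mathcomp Require Import all_boot.
Set Implicit Arguments. Unset Strict Implicit. Unset Printing Implicit Defensive.

Definition simple_graph (T : finType) (e : rel T) : Prop :=
  symmetric e /\ irreflexive e.

Definition is_edge (T : finType) (e : rel T) (f : {set T}) : bool :=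
  [exists x, exists y, e x y && (f == [set x; y])].

Definition regular (T : finType) (e : rel T) (d : nat) : Prop :=
  forall x : T, #|[set y | e x y]| = d.

Definition bipartite (T : finType) (e : rel T) : Prop :=
  exists A : {set T}, forall x y, e x y -> (x \in A) != (y \in A).

(* girth >= g : every cycle (closed walk on >= 3 distinct vertices) has length >= g.
   Acyclic graphs have infinite girth and satisfy this for all g. *)
Definition girth_at_least (T : finType) (e : rel T) (g : nat) : Prop :=
  forall p : seq T, uniq p -> 3 <= size p -> cycle e p -> g <= size p.

(* Injective edge coloring with colours 'I_k (only the values on edges matter):
   distinct edges f1, f2 get distinct colours whenever (i) they are disjoint and
   some edge joins an endpoint of f1 to an endpoint of f2, or (ii) they lie in a
   common triangle {a, b, z}. *)
Definition injective_edge_coloring (T : finType) (e : rel T) (k : nat)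
  (c : {ffun {set T} -> 'I_k}) : bool :=
  [forall f1 : {set T}, forall f2 : {set T},
    [&& is_edge e f1, is_edge e f2, f1 != f2 &
      ( ([disjoint f1 & f2] && [exists u in f1, exists v in f2, e u v])
        || [exists a, exists b, exists z,
              [&& e a b, e b z, e a z & f1 :|: f2 == [set a; b; z]]] )]
    ==> (c f1 != c f2)].

Definition inj_edge_colorable (T : finType) (e : rel T) (k : nat) : bool :=
  [exists c : {ffun {set T} -> 'I_k}, injective_edge_coloring e c].

Lemma inj_edge_colorable_exists (T : finType) (e : rel T) :
  exists k, inj_edge_colorable e k.
Proof.
exists #|{set T}|; apply/existsP; exists [ffun A => enum_rank A].
apply/forallP => f1; apply/forallP => f2; apply/implyP => /and4P [_ _ ne _].
by rewrite !ffunE; apply: contra ne => /eqP /enum_rank_inj ->.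
Qed.

Definition inj_chromatic_index (T : finType) (e : rel T) : nat :=
  ex_minn (inj_edge_colorable_exists e).

(* Main.v *)
Require Import Defs.
From mathcomp Require Import all_boot.
From mathcomp Require Import fingroup perm zify.
Set Implicit Arguments. Unset Strict Implicit. Unset Printing Implicit Defensive.


Lemma perm_extend (X : finType) (f : X -> X) (s : seq X) :
  {in s &, injective f} -> {sg : {perm X} | {in s, forall x, sg x = f x}}.
Proof.
elim: s => [|x s IH] inj.
  by exists 1%g.
have [|sg Hsg] := IH.
  by move=> a b Ha Hb; apply: inj; rewrite inE ?Ha ?Hb orbT.
case xs: (x \in s).
  by exists sg => z; rewrite inE => /predU1P [->|]; [apply: Hsg|apply: Hsg].
exists (sg * tperm (sg x) (f x))%g => z; rewrite inE permM => /predU1P [->|zs].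
  by rewrite tpermL.
have zx : z != x by apply: contraNneq (negbT xs) => <-.
rewrite (Hsg z zs) tpermD //.
  by apply: contra zx => /eqP; rewrite -Hsg // => /perm_inj ->.
by apply: contra zx => /eqP /inj -> //; rewrite inE ?zs ?eqxx ?orbT.
Qed.

Section Free.
Variables (n R : nat).
Definition L := ('I_n.+1 * bool)%type.
Definition linv (a : L) : L := (a.1, ~~ a.2).
Definition rr (x y : L) := y != linv x.
Local Notation X := {bseq R of L}.

Lemma rr_refl a : rr a a.
Proof. by case: a => i b; rewrite /rr /linv /= xpair_eqE eqxx /=; case: b. Qed.

Lemma sorted_rcons w a : sorted rr (rcons w a) = sorted rr w && rr (last a w) a.
Proof. case: w => [|x w] /=; first by rewrite rr_refl. by rewrite rcons_path. Qed.

Definition droplast (s : seq L) := take (size s).-1 s.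
Lemma droplast_rcons u b : droplast (rcons u b) = u.
Proof. by rewrite /droplast size_rcons /= -cats1 take_size_cat. Qed.

Section Gen.
Variable i : 'I_n.+1.
Let a0 : L := (i, false).

Definition indom (x : X) := sorted rr x &&
  ((size x < R) && (last a0 x != linv a0) || (last a0 x == linv a0)).

Definition fext (x : X) : X :=
  if last a0 x == linv a0 then insub_bseq R (droplast x)
  else insub_bseq R (rcons x a0).

Lemma val_insub_bseq (s : seq L) : size s <= R -> val (insub_bseq R s) = s.
Proof. by move=> h; rewrite /insub_bseq /insubd insubT. Qed.

Lemma last_eq_rcons (s : seq L) d b : s != [::] -> last d s = b -> s = rcons (droplast s) b.
Proof.
case/lastP: s => [//|u c] _; rewrite last_rcons => ->. by rewrite droplast_rcons.
Qed.

Lemma size_droplast (s : seq L) : size (droplast s) <= size s.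
Proof. by rewrite /droplast size_take; case: ifP => // /ltnW. Qed.

Lemma fext_inj : {in [seq x <- enum X | indom x] &, injective fext}.
Proof.
move=> x y; rewrite !mem_filter /indom => /andP [/andP [rx hx] _] /andP [/andP [ry hy] _].
rewrite /fext.
have nilx : last a0 x == linv a0 -> (x : seq L) != [::].
  by clear; case: x => [[|? ?] ?] //=; rewrite /linv /= xpair_eqE eqxx.
have nily : last a0 y == linv a0 -> (y : seq L) != [::].
  by clear; case: y => [[|? ?] ?] //=; rewrite /linv /= xpair_eqE eqxx.
have sx := size_bseq x; have sy := size_bseq y.
have hd : forall z : X, size (droplast z) <= R.
  by move=> z; exact: (leq_trans (size_droplast _) (size_bseq z)).
case: ifP hx => lx hx; case: ifP hy => ly hy => /(congr1 val).
- rewrite !val_insub_bseq ?hd // => E; apply: val_inj => /=.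
  by rewrite (last_eq_rcons (nilx lx) (eqP lx)) (last_eq_rcons (nily ly) (eqP ly)) E.
- rewrite orbF in hy; case/andP: hy => hy _.
  rewrite !val_insub_bseq ?hd ?size_rcons //.
  move=> E; move: rx; rewrite (last_eq_rcons (nilx lx) (eqP lx)) E.
  by rewrite !sorted_rcons last_rcons /rr eqxx !andbF.
- rewrite orbF in hx; case/andP: hx => hx _.
  rewrite !val_insub_bseq ?hd ?size_rcons //.
  move=> E; move: ry; rewrite (last_eq_rcons (nily ly) (eqP ly)) -E.
  by rewrite !sorted_rcons last_rcons /rr eqxx !andbF.
- move: hx hy; rewrite !orbF => /andP [hx _] /andP [hy _].
  rewrite !val_insub_bseq ?size_rcons // => /rcons_inj [E]; exact: val_inj.
Qed.

Definition pgen : {perm X} := sval (perm_extend fext_inj).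
Lemma pgenE x : indom x -> pgen x = fext x.
Proof.
move=> h; apply: (svalP (perm_extend fext_inj)).
by rewrite mem_filter h mem_enum.
Qed.
End Gen.

Definition gen (a : L) : {perm X} := if a.2 then (pgen a.1)^-1%g else pgen a.1.
Fixpoint eval (w : seq L) : {perm X} :=
  match w with [::] => 1%g | a :: w' => (gen a * eval w')%g end.

Lemma eval_rcons w a : eval (rcons w a) = (eval w * gen a)%g.
Proof. elim: w => [|b w IH] /=; first by rewrite mulg1 mul1g. by rewrite IH mulgA. Qed.

Definition eps : X := [bseq].

Lemma rrC a b : rr a b = (a != linv b).
Proof.
case: a b => [i c] [j d]; rewrite /rr /linv /= !xpair_eqE.
by case: c; case: d; rewrite /= ?andbT ?andbF // eq_sym.
Qed.

Lemma eval_free (w : seq L) : sorted rr w -> size w <= R -> val (eval w eps) = w.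
Proof.
elim/last_ind: w => [|w a IH]; first by rewrite /= perm1.
rewrite sorted_rcons size_rcons => /andP [rw ra] sw.
rewrite eval_rcons permM.
have := IH rw (ltnW sw).
move: (eval w eps) => x xw; clear IH.
have {}xw : (x : seq L) = w := xw.
subst w.
case: a ra => i b ra; rewrite /gen /=.
case: b ra => ra.
-
  have [y yv] : {y : X | (y : seq L) = rcons x (i, true)}.
    by exists (insub_bseq R (rcons x (i, true))); rewrite val_insub_bseq // size_rcons.
  have xy : x = pgen i y.
    rewrite pgenE; last first.
      by rewrite /indom yv last_rcons /linv /= eqxx orbT andbT sorted_rcons rw ra.
    rewrite /fext yv last_rcons /linv /= eqxx; apply: val_inj.
    by rewrite /= val_insub_bseq droplast_rcons // (leq_trans (ltnW sw)).
  by rewrite [in LHS]xy permK yv.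
- have nl : (last (i, false) x == linv (i, false)) = false.
    by apply: negbTE; move: ra; rewrite rrC.
  rewrite pgenE; last by rewrite /indom rw sw nl.
  by rewrite /fext nl val_insub_bseq // size_rcons.
Qed.
End Free.

Section Graph.
Variables (n R : nat).
Local Notation X := {bseq R of L n}.
Local Notation gen := (@gen n R).
Local Notation eval := (@eval n R).
Definition GT := ({perm X} * bool)%type.

Definition adj (u v : GT) : bool :=
  (u.2 != v.2) && [exists i : 'I_n.+1, v.1 == (u.1 * gen (i, u.2))%g].

Lemma gen_inv (i : 'I_n.+1) b : (gen (i, b) * gen (i, ~~ b))%g = 1%g :> {perm X}.
Proof. by case: b; rewrite /gen /= ?mulVg ?mulgV. Qed.

Lemma linvK : involutive (@linv n).
Proof. by case=> i b; rewrite /linv /= negbK. Qed.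

Lemma gen_linv (a : L n) : (gen a * gen (linv a))%g = 1%g.
Proof. by case: a => i b; rewrite /linv gen_inv. Qed.

Lemma adj_sym : symmetric adj.
Proof.
suff H : forall u v, adj u v -> adj v u by move=> u v; apply/idP/idP; apply: H.
move=> [h b] [h' b'] /andP [/= bb /existsP [i /eqP ->]].
rewrite /adj /= eq_sym bb; apply/existsP; exists i.
have -> : b' = ~~ b by case: b b' bb => [] [].
by rewrite -mulgA gen_inv mulg1.
Qed.

Lemma adj_irr : irreflexive adj.
Proof. by move=> u; rewrite /adj eqxx. Qed.

Definition letter (u v : GT) : L n :=
  (odflt ord0 [pick i | v.1 == (u.1 * gen (i, u.2))%g], u.2).

Lemma letterP u v : adj u v -> v.1 = (u.1 * gen (letter u v))%g.
Proof.
case/andP => _ /existsP [i hi]; rewrite /letter.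
by case: pickP => [j /eqP //|/(_ i)]; rewrite hi.
Qed.

Lemma adj2 u v : adj u v -> v.2 = ~~ u.2.
Proof. by case/andP; case: u.2; case: v.2. Qed.

Lemma walk_eval x q : path adj x q ->
  (x.1 * eval (pairmap letter x q))%g = (last x q).1.
Proof.
elim: q x => [|y q IH] x /=; first by rewrite mulg1.
by case/andP => xy pq; rewrite mulgA -letterP // IH.
Qed.

Lemma walk_reduced d x q : path adj x q ->
  (forall t, t.+2 < size (x :: q) -> nth d (x :: q) t != nth d (x :: q) t.+2) ->
  sorted (@rr n) (pairmap letter x q).
Proof.
elim: q x => [//|y q IH] x /andP [xy pq] H.
have IH' := IH y pq (fun t ht => H t.+1 ht).
case: q pq H IH IH' => [//|z q] /= /andP [yz pq] H _ ->; rewrite andbT.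
rewrite rrC; apply: contra (H 0 isT) => /eqP E.
have ez := letterP yz; have ey := letterP xy.
rewrite /= in E *.
have E' : letter y z = linv (letter x y) by rewrite E linvK.
have z1 : z.1 = x.1 by rewrite ez E' ey -mulgA gen_linv mulg1.
have z2 : z.2 = x.2 by rewrite (adj2 yz) (adj2 xy) negbK.
by apply/eqP; rewrite [x]surjective_pairing [z]surjective_pairing z1 z2.
Qed.
Lemma girth_ok (p : seq GT) : uniq p -> 3 <= size p -> path.cycle adj p -> R < size p.
Proof.
case: p => [//|x p'] up sp cyc; rewrite ltnNge; apply/negP => sR.
have E := walk_eval cyc; rewrite last_rcons in E.
set w := pairmap letter x (rcons p' x) in E.
have E1 : eval w = 1%g by apply: (@mulgI _ x.1); rewrite E mulg1.
have rw : sorted (@rr n) w.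
  apply: (walk_reduced (d:=x) cyc) => t; rewrite -rcons_cons size_rcons !nth_rcons => ht.
  have t1 : t < size (x :: p') by move: ht; rewrite ltnS => /ltnW.
  rewrite t1; case: ifP => t2.
    by rewrite nth_uniq //; lia.
  have -> : t.+2 == size (x :: p') by move: ht t2; rewrite /= => ? /negbT; lia.
  have -> : x = nth x (x :: p') 0 by [].
  rewrite nth_uniq //; apply/negP => /eqP t0; subst t.
  by rewrite sp in t2.
have sw : size w <= R by rewrite size_pairmap size_rcons.
have := eval_free rw sw; rewrite E1 perm1 => /= w0.
have : size w = size (x :: p') by rewrite size_pairmap size_rcons.
by rewrite -w0 => sz; rewrite -sz in sp.
Qed.

Lemma pgen_inj : 1 < R -> injective (@pgen n R).
Proof.
move=> R2 i j E; apply/eqP; apply/negP => /negP ij.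
have rw : sorted (@rr n) [:: (i, false); (j, true)].
  by rewrite /= andbT /rr /linv /= xpair_eqE eqxx andbT eq_sym.
have := eval_free rw R2; rewrite /= /gen /= E mulg1 mulgV perm1.
by [].
Qed.

Lemma regular_ok : 1 < R -> forall x : GT, #|[set y | adj x y]| = n.+1.
Proof.
move=> R2 x.
have -> : [set y | adj x y] = [set ((x.1 * gen (i, x.2))%g, ~~ x.2) | i : 'I_n.+1].
  apply/setP => y; rewrite inE; apply/idP/imsetP.
    move=> xy; have [i /eqP hi] := existsP (proj2 (andP xy)).
    exists i => //; rewrite -hi -(adj2 xy); exact: surjective_pairing.
  move=> [i _ ->]; rewrite /adj /=; apply/andP; split.
    by case: x.2.
  by apply/existsP; exists i.
rewrite card_imset ?card_ord // => i j [/mulgI].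
case: x.2; rewrite /gen /=; [move/invg_inj|]; exact: pgen_inj.
Qed.
End Graph.

Section Lower.
Variables (T : finType) (e : rel T) (D k : nat).
Hypothesis esym : symmetric e.
Hypothesis eirr : irreflexive e.
Hypothesis etri : forall a b z, e a b -> e b z -> e a z -> False.
Variable c : {ffun {set T} -> 'I_k}.
Hypothesis cinj : injective_edge_coloring e c.

Definition col x y := c [set x; y].
Lemma colC x y : col x y = col y x.
Proof. by rewrite /col setUC. Qed.

Lemma neq_of_e x y : e x y -> x != y.
Proof. by apply: contraTneq => ->; rewrite eirr. Qed.

Lemma is_edge2 x y : e x y -> is_edge e [set x; y].
Proof. by move=> h; apply/existsP; exists x; apply/existsP; exists y; rewrite h eqxx. Qed.

Lemma conflict x x' y y' : e x x' -> e y y' -> e x y ->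
  x' != y -> y' != x -> x' != y' -> col x x' != col y y'.
Proof.
move=> exx eyy exy n1 n2 n3.
have nxy := neq_of_e exy; have nxx := neq_of_e exx; have nyy := neq_of_e eyy.
have H := forallP (forallP cinj [set x; x']) [set y; y'].
apply: (implyP H); rewrite !is_edge2 //=.
have ->: [set x; x'] != [set y; y'].
  apply/negP => /eqP E; have : x \in [set y; y'] by rewrite -E set21.
  by rewrite !inE (negbTE nxy) /= eq_sym (negbTE n2).
have ->: [disjoint [set x; x'] & [set y; y']].
  rewrite disjoints_subset; apply/subsetP => z; rewrite !inE => /orP [] /eqP ->.
    by rewrite negb_or nxy /= eq_sym.
  by rewrite negb_or n1 n3.
apply/orP; left; apply/existsP; exists x; rewrite set21; apply/existsP; exists y.
by rewrite set21.
Qed.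

Definition Nj (j : 'I_k) x := [set y | e x y && (col x y == j)].
Definition Vj (j : 'I_k) := [set x | [exists y, e x y && (col x y == j)]].
Definition Dj (j : 'I_k) := [set d : T * T | e d.1 d.2 && (col d.1 d.2 == j)].
Definition Dd := [set d : T * T | e d.1 d.2].

Lemma induced j x y : e x y -> x \in Vj j -> y \in Vj j -> col x y = j.
Proof.
move=> exy; rewrite !inE => /existsP [x' /andP [exx /eqP cx]] /existsP [y' /andP [eyy /eqP cy]].
apply/eqP; apply/negP => /negP ne.
case: (eqVneq x' y) => [E|n1]; first by subst x'; rewrite cx eqxx in ne.
case: (eqVneq y' x) => [E|n2]; first by subst y'; rewrite colC cy eqxx in ne.
case: (eqVneq x' y') => [E|n3].
  by subst y'; apply: (etri exy eyy exx).
by have := conflict exx eyy exy n1 n2 n3; rewrite cx cy eqxx.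
Qed.

Lemma other_nbr (A : {set T}) y : y \in A -> #|A| != 1 -> exists2 z, z \in A & z != y.
Proof.
move=> yA; case: (pickP [pred z | (z \in A) && (z != y)]) => [z /andP [? ?]|H].
  by exists z.
suff -> : A = [set y] by rewrite cards1.
apply/setP => z; rewrite inE; apply/idP/eqP => [zA|->//].
by move: (H z) => /=; rewrite zA /= => /negbFE/eqP.
Qed.

Lemma uniq_nbr (A : {set T}) y z : #|A| = 1 -> y \in A -> z \in A -> z = y.
Proof. by move=> /eqP h; have [a ->] := cards1P h; rewrite !inE => /eqP -> /eqP ->. Qed.

Lemma star j x y : e x y -> col x y = j -> #|Nj j x| = 1 \/ #|Nj j y| = 1.
Proof.
move=> exy cxy.
case: (eqVneq #|Nj j x| 1) => [|hx]; first by left.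
case: (eqVneq #|Nj j y| 1) => [|hy]; first by right.
exfalso.
have yN : y \in Nj j x by rewrite inE exy cxy eqxx.
have xN : x \in Nj j y by rewrite inE esym exy colC cxy eqxx.
have [x' ] := other_nbr yN hx; rewrite inE => /andP [exx /eqP cx] n1.
have [y' ] := other_nbr xN hy; rewrite inE => /andP [eyy /eqP cy] n2.
case: (eqVneq x' y') => [E|n3].
  by subst y'; apply: (etri exy eyy exx).
by have := conflict exx eyy exy n1 n2 n3; rewrite cx cy eqxx.
Qed.
Lemma plus2 (U : finType) (A B : {set U}) m1 m2 : A \subset B -> m1 \in B -> m2 \in B ->
  m1 \notin A -> m2 \notin A -> m1 != m2 -> #|A| + 2 <= #|B|.
Proof.
move=> AB m1B m2B m1A m2A m12.
have : m2 |: (m1 |: A) \subset B by rewrite !subUset !sub1set m1B m2B AB.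
move/subset_leq_card; rewrite !cardsU1 m1A !inE negb_or eq_sym m12 m2A /=.
lia.
Qed.

Lemma memN j x y : e x y -> col x y = j -> [/\ y \in Nj j x, x \in Nj j y, x \in Vj j & y \in Vj j].
Proof.
move=> exy cxy; have eyx : e y x by rewrite esym.
have cyx : col y x = j by rewrite colC.
rewrite !inE exy eyx cxy cyx eqxx /=; split=> //.
  by apply/existsP; exists y; rewrite exy cxy eqxx.
by apply/existsP; exists x; rewrite esym exy colC cxy eqxx.
Qed.

Definition phi j (d : T * T) : T * bool :=
  if #|Nj j d.2| == 1 then (d.2, true) else (d.1, false).

Lemma phi_inj j : {in Dj j &, injective (phi j)}.
Proof.
move=> [x y] [x' y']; rewrite !inE /= => /andP [exy /eqP cxy] /andP [exy' /eqP cxy'].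
have [_ xN _ _] := memN exy cxy; have [_ xN' _ _] := memN exy' cxy'.
have [yN _ _ _] := memN exy cxy; have [yN' _ _ _] := memN exy' cxy'.
rewrite /phi /=; case: ifP => hy; case: ifP => hy' // [].
- move=> E; subst y'; move: hy => /eqP hy.
  by rewrite (uniq_nbr hy xN xN').
- move=> E; subst x'.
  have hx : #|Nj j x| = 1 by case: (star exy cxy) => //; move/eqP; rewrite hy.
  by rewrite (uniq_nbr hx yN yN').
Qed.

Lemma count_star j : 0 < #|Dj j| -> #|Dj j| + 2 <= 2 * #|Vj j|.
Proof.
move=> /card_gt0P [[x y]]; rewrite inE /= => /andP [exy /eqP cxy].
have [yN xN xV yV] := memN exy cxy.
rewrite -(card_in_imset (@phi_inj j)).
have sub : phi j @: Dj j \subset setX (Vj j) [set: bool].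
  apply/subsetP => p /imsetP [[a b]]; rewrite inE /= => /andP [eab /eqP cab] ->.
  have [_ _ aV bV] := memN eab cab.
  by rewrite /phi /=; case: ifP => _; rewrite in_setX in_setT ?aV ?bV.
have imdeg : forall p, p \in phi j @: Dj j -> #|Nj j p.1| = 1.
  move=> p /imsetP [[a b]]; rewrite inE /= => /andP [eab /eqP cab] ->.
  rewrite /phi /=; case: ifP => [/eqP //|/negbT /eqP hb].
  by case: (star eab cab).
have card2 : #|setX (Vj j) [set: bool]| = 2 * #|Vj j| by rewrite cardsX cardsT card_bool mulnC.
rewrite -card2.
have nxy := neq_of_e exy.
case: (eqVneq #|Nj j x| 1) => hx; last first.
  apply: (plus2 (m1 := (x, true)) (m2 := (x, false))) => //; rewrite ?in_setX ?in_setT ?xV //;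
    try (by rewrite xpair_eqE ?andbT ?andbF);
    by apply/negP => H; have /= h' := imdeg _ H; rewrite h' eqxx in hx.
case: (eqVneq #|Nj j y| 1) => hy; last first.
  apply: (plus2 (m1 := (y, true)) (m2 := (y, false))) => //; rewrite ?in_setX ?in_setT ?yV //;
    try (by rewrite xpair_eqE ?andbT ?andbF);
    by apply/negP => H; have /= h' := imdeg _ H; rewrite h' eqxx in hy.
have miss : forall a b, e a b -> col a b = j -> #|Nj j a| = 1 -> #|Nj j b| = 1 ->
    (a, false) \notin phi j @: Dj j.
  move=> a b eab cab ha hb; apply/negP => /imsetP [[a' b']]; rewrite inE /= => /andP [eab' /eqP cab'].
  rewrite /phi /=; case: ifP => // /negbT hb' [E]; subst a'.
  have [bN _ _ _] := memN eab cab; have [bN' _ _ _] := memN eab' cab'.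
  by move: hb'; rewrite (uniq_nbr ha bN bN') hb.
apply: (plus2 (m1 := (x, false)) (m2 := (y, false))) => //; rewrite ?in_setX ?in_setT ?xV ?yV //; try (by rewrite xpair_eqE andbT).
- exact: miss exy cxy hx hy.
- apply: (miss y x) => //; [by rewrite esym | by rewrite colC].
Qed.
Hypothesis ereg : forall x, #|[set y | e x y]| = D.

Definition Pj j := [set d : T * T | (d.1 \in Vj j) && e d.1 d.2].

Lemma count_P j : #|Pj j| = D * #|Vj j|.
Proof.
rewrite /Pj -sum1dep_card.
rewrite -(pair_big_dep (fun x => x \in Vj j) (fun x y => e x y) (fun _ _ => 1)) /=.
rewrite (eq_bigr (fun _ => D)) => [|x _]; first by rewrite sum_nat_const mulnC.
by rewrite sum1dep_card ereg.
Qed.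

Lemma count_bound j : 2 * (D * #|Vj j|) <= #|Dd| + #|Dj j|.
Proof.
rewrite -count_P.
pose S2 := [set d : T * T | d.2 \in Vj j].
have hID := cardsID S2 (Pj j).
have PS : Pj j :&: S2 = Dj j.
  apply/setP => [[x y]]; rewrite !inE /=; apply/idP/idP.
    case/andP => /andP [xV exy] yV.
    have xV' : x \in Vj j by rewrite inE.
    have yV' : y \in Vj j by rewrite inE.
    by rewrite exy (induced exy xV' yV') eqxx.
  by case/andP => exy /eqP cxy; have [_ _ xV yV] := memN exy cxy; rewrite !inE in xV yV; rewrite xV yV exy.
pose sw (d : T * T) := (d.2, d.1).
have swi : injective sw by move=> [a b] [a' b'] [-> ->].
pose Q := sw @: (Pj j :\: S2).
have cQ : #|Q| = #|Pj j :\: S2| by rewrite card_imset.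
have PQ : Pj j :&: Q = set0.
  apply/setP => [[x y]]; rewrite !inE /=; apply/negP => /andP [/andP [xV _]].
  by case/imsetP => [[a b]]; rewrite !inE /= => /andP [bV _] [E _]; rewrite -E xV in bV.
have sub : Pj j :|: Q \subset Dd.
  rewrite subUset; apply/andP; split; apply/subsetP => [[x y]]; rewrite !inE /=.
    by case/andP.
  case/imsetP => [[a b]]; rewrite !inE /= => /andP [_ /andP [_ eab]] [-> ->].
  by rewrite esym.
have := subset_leq_card sub; rewrite cardsU PQ cards0 subn0 cQ.
rewrite PS in hID; lia.
Qed.

Lemma sum_Dj : \sum_(j < k) #|Dj j| = #|Dd|.
Proof.
rewrite /Dd -sum1dep_card (partition_big (fun d => col d.1 d.2) xpredT) //=.
by apply: eq_bigr => j _; rewrite sum1dep_card.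
Qed.

Lemma lower_bound (x0 : T) : 0 < D -> D <= k.
Proof.
move=> D0; rewrite leqNgt; apply/negP => kD.
set N := #|Dd|.
have H2 : forall j, 0 < #|Dj j| -> D.-1 * #|Dj j| + 2 * D <= N.
  move=> j ha; have h1 := count_bound j; have h2 := leq_mul (leqnn D) (count_star ha).
  rewrite -/N in h1; nia.
have H1 : forall j, D.-1 * #|Dj j| <= N.
  move=> j; case: (posnP #|Dj j|) => [->|ha]; first by rewrite muln0.
  by have := H2 j ha; lia.
have [y0] : exists y0, y0 \in [set y | e x0 y].
  by apply/card_gt0P; rewrite ereg.
rewrite inE => e0.
pose j0 := col x0 y0.
have a0 : 0 < #|Dj j0|.
  by apply/card_gt0P; exists (x0, y0); rewrite inE /= e0 eqxx.
have E1 : D.-1 * N = D.-1 * #|Dj j0| + \sum_(j | j != j0) D.-1 * #|Dj j|.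
  by rewrite /N -sum_Dj big_distrr (bigD1 j0) //=.
have E2 : \sum_(j < k) N = N + \sum_(j | j != j0) N by rewrite (bigD1 j0).
have E3 : \sum_(j < k) N = k * N by rewrite sum_nat_const card_ord.
have L : \sum_(j | j != j0) D.-1 * #|Dj j| <= \sum_(j | j != j0) N.
  by apply: leq_sum => j _; exact: H1.
have kN : k * N <= D.-1 * N by apply: leq_mul => //; lia.
have := H2 j0 a0; lia.
Qed.
End Lower.


Theorem proposition1p8 (Delta g : nat) :
  3 <= Delta -> 3 <= g ->
  exists (T : finType) (e : rel T),
    [/\ simple_graph e, regular e Delta, bipartite e,
        girth_at_least e g & Delta <= inj_chromatic_index e].
Proof.
case: Delta => [//|n] hD hg.
have g1 : 1 < g by apply: leq_trans hg.
exists (GT n g), (@adj n g).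
have etri : forall a b z : GT n g, adj a b -> adj b z -> adj a z -> False.
  move=> a b z ab bz az; move: (adj2 ab) (adj2 bz) (adj2 az).
  by case: a.2; case: b.2; case: z.2.
split.
- split; [exact: adj_sym | exact: adj_irr].
- exact: regular_ok.
- exists [set u : GT n g | ~~ u.2] => x y xy; rewrite !inE (adj2 xy).
  by case: x.2.
- by move=> p up sp cp; apply: ltnW; apply: girth_ok.
- rewrite /inj_chromatic_index; case: ex_minnP => k /existsP [c cinj] _.
  apply: (lower_bound (@adj_sym n g) (@adj_irr n g) etri cinj (regular_ok g1) (1%g, false)).
  by [].
Qed.
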